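(* Let $n\ge 2$, let $M$ be an $(n-1)\times(n-1)$ circulant matrix over $R$, and let $\alpha,\beta,\gamma\in R$ with $\gamma=\beta$ or $\gamma=-\beta$. Let $B$ be the $n\times n$ bordered circulant matrix whose first row is $(\alpha,\beta,\dots,\beta)$, whose first column is $(\alpha,\gamma,\dots,\gamma)^T$, and whose lower-right $(n-1)\times(n-1)$ block is $M$. Then the linear code over $R$ generated by the rows of $[I_n\mid B]$ is a Euclidean isodual code of length $2n$ over $R$.
   Context: $R=\mathbb{Z}_4[v]/(v^2-v)$. Linear codes over $R$ are $R$-submodules of $R^N$; the Euclidean dual of $\mathcal{C}$ is $\mathcal{C}^\perp=\{\mathbf{x}:\sum_ix_ic_i=0\ \forall\mathbf{c}\in\mathcal{C}\}$. Two codes of length $N$ over $R$ are equivalent if one is obtained from the other by a permutation of coordinates followed by multiplication of some coordinates by units of $R$. A code is Euclidean isodual if it is equivalent to its Euclidean dual. A circulant matrix is one in which each row is the cyclic shift by one position to the right of the previous row. *)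

(* Defs.v *)
From HB Require Import structures.
From mathcomp Require Import all_boot all_order all_algebra all_fingroup.
Set Implicit Arguments. Unset Strict Implicit. Unset Printing Implicit Defensive.
Import GRing.Theory.
Local Open Scope ring_scope.

(* The ring R = Z_4[v]/(v^2 - v): an element a + b v is represented by the
   pair of coefficients (a, b) in Z_4 x Z_4; multiplication uses v^2 = v:
   (a + b v)(c + d v) = ac + (ad + bc + bd) v. *)
Inductive Rv := MkR of 'Z_4 & 'Z_4.
Definition rv_a (x : Rv) := let: MkR a _ := x in a.
Definition rv_b (x : Rv) := let: MkR _ b := x in b.
Definition rv_to (x : Rv) : 'Z_4 * 'Z_4 := (rv_a x, rv_b x).
Definition rv_of (p : 'Z_4 * 'Z_4) : Rv := MkR p.1 p.2.
Lemma rv_toK : cancel rv_to rv_of. Proof. by case. Qed.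
HB.instance Definition _ := Finite.copy Rv (can_type rv_toK).


Definition rv_zero := MkR 0 0.
Definition rv_one := MkR 1 0.
Definition rv_v := MkR 0 1.
Definition rv_add x y := MkR (rv_a x + rv_a y) (rv_b x + rv_b y).
Definition rv_opp x := MkR (- rv_a x) (- rv_b x).
Definition rv_mul x y :=
  MkR (rv_a x * rv_a y)
      (rv_a x * rv_b y + rv_b x * rv_a y + rv_b x * rv_b y).

Definition z4s : seq 'Z_4 := [:: 0; 1; 2%:R; 3%:R].
Lemma mem_z4s (x : 'Z_4) : x \in z4s.
Proof. by case: x => [[|[|[|[|n]]]] Hn] //; apply/orP; vm_compute. Qed.
Definition rvs : seq Rv := [seq MkR a b | a <- z4s, b <- z4s].
Lemma mem_rvs (x : Rv) : x \in rvs.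
Proof. case: x => a b; apply/allpairsP; exists (a, b); by rewrite !mem_z4s. Qed.
Lemma all1 (P Q : Rv -> Rv) :
  all (fun x => P x == Q x) rvs -> forall x, P x = Q x.
Proof. by move=> /allP H x; apply/eqP/H/mem_rvs. Qed.
Lemma all2 (P Q : Rv -> Rv -> Rv) :
  all (fun x => all (fun y => P x y == Q x y) rvs) rvs -> forall x y, P x y = Q x y.
Proof. by move=> /allP H x y; move/allP: (H x (mem_rvs x)) => /(_ y (mem_rvs y))/eqP. Qed.
Lemma all3 (P Q : Rv -> Rv -> Rv -> Rv) :
  all (fun x => all (fun y => all (fun z => P x y z == Q x y z) rvs) rvs) rvs ->
  forall x y z, P x y z = Q x y z.
Proof.
move=> /allP H x y z; move/allP: (H x (mem_rvs x)) => /(_ y (mem_rvs y)).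
by move/allP => /(_ z (mem_rvs z))/eqP.
Qed.

Lemma rv_addA : associative rv_add.
Proof. move=> x y z; apply (all3 (P := fun x y z => rv_add x (rv_add y z)) (Q := fun x y z => rv_add (rv_add x y) z)); vm_compute; reflexivity. Qed.

Lemma rv_addC : commutative rv_add.
Proof. move=> x y; apply (all2 (P := fun x y => rv_add x y) (Q := fun x y => rv_add y x)); vm_compute; reflexivity. Qed.

Lemma rv_add0 : left_id rv_zero rv_add.
Proof. move=> x; apply (all1 (P := fun x => rv_add rv_zero x) (Q := fun x => x)); vm_compute; reflexivity. Qed.

Lemma rv_addN : left_inverse rv_zero rv_opp rv_add.
Proof. move=> x; apply (all1 (P := fun x => rv_add (rv_opp x) x) (Q := fun x => rv_zero)); vm_compute; reflexivity. Qed.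

HB.instance Definition _ := GRing.isZmodule.Build Rv rv_addA rv_addC rv_add0 rv_addN.

Lemma rv_mulA : associative rv_mul.
Proof. move=> x y z; apply (all3 (P := fun x y z => rv_mul x (rv_mul y z)) (Q := fun x y z => rv_mul (rv_mul x y) z)); vm_compute; reflexivity. Qed.

Lemma rv_mulC : commutative rv_mul.
Proof. move=> x y; apply (all2 (P := fun x y => rv_mul x y) (Q := fun x y => rv_mul y x)); vm_compute; reflexivity. Qed.

Lemma rv_mul1 : left_id rv_one rv_mul.
Proof. move=> x; apply (all1 (P := fun x => rv_mul rv_one x) (Q := fun x => x)); vm_compute; reflexivity. Qed.

Lemma rv_mulDl : left_distributive rv_mul rv_add.
Proof. move=> x y z; apply (all3 (P := fun x y z => rv_mul (rv_add x y) z) (Q := fun x y z => rv_add (rv_mul x z) (rv_mul y z))); vm_compute; reflexivity. Qed.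

Lemma rv_one_neq0 : rv_one != rv_zero.
Proof. by vm_compute. Qed.
HB.instance Definition _ :=
  GRing.Zmodule_isComNzRing.Build Rv rv_mulA rv_mulC rv_mul1 rv_mulDl rv_one_neq0.

Lemma rv_vv : rv_v * rv_v = rv_v. Proof. by apply/eqP; vm_compute. Qed.

Definition rv_unit (r : Rv) : Prop := exists w : Rv, r * w = 1.

Definition code_gen (k N : nat) (G : 'M[Rv]_(k, N)) : {set 'rV[Rv]_N} :=
  [set x : 'rV[Rv]_N | [exists u : 'rV[Rv]_k, x == u *m G]].

Definition euclid_dual (N : nat) (C : {set 'rV[Rv]_N}) : {set 'rV[Rv]_N} :=
  [set x : 'rV[Rv]_N | [forall (c : 'rV[Rv]_N | c \in C), \sum_(i < N) x 0 i * c 0 i == 0]].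

Definition code_equiv (N : nat) (C D : {set 'rV[Rv]_N}) : Prop :=
  exists (s : 'S_N) (u : 'I_N -> Rv), (forall i, rv_unit (u i)) /\
    D = [set \row_i (u i * c 0 (s i)) | c : 'rV[Rv]_N in C].

Definition euclid_isodual (N : nat) (C : {set 'rV[Rv]_N}) : Prop :=
  code_equiv C (euclid_dual C).

Definition circulant (m : nat) (M : 'M[Rv]_m) : Prop :=
  forall (i j : 'I_m) (Hi : (i.+1 < m)%N), M (Ordinal Hi) (ordS j) = M i j.

Definition bordered (m : nat) (a b c : Rv) (M : 'M[Rv]_m) : 'M[Rv]_m.+1 :=
  \matrix_(i, j)
    match unlift ord0 i, unlift ord0 j with
    | None, None => a
    | None, Some _ => b
    | Some _, None => c
    | Some i', Some j' => M i' j'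
    end.

(* Main.v *)
Require Import Defs.
From HB Require Import structures.
From mathcomp Require Import all_boot all_order all_algebra all_fingroup.
From mathcomp Require Import zify.
Set Implicit Arguments. Unset Strict Implicit. Unset Printing Implicit Defensive.
Import GRing.Theory.
Local Open Scope ring_scope.

Section Aux.
Variable k : nat.
Local Notation m := k.+1.

Definition pp (j : 'I_m) : 'I_m := inord ((m - j) %% m).

Lemma ppK : involutive pp.
Proof.
move=> j; apply/val_inj; rewrite /pp /= !inordK ?ltn_pmod //.
have Hj := ltn_ord j.
case: (eqVneq (val j) 0%N) => [->|Hj0]; first by rewrite subn0 modnn subn0 modnn.
have Hj1 : (0 < j)%N by rewrite lt0n.
rewrite (@modn_small (m - j)); last by lia.
rewrite modn_small; lia.
Qed.

Lemma arith1 t bb : (t.+1 < m)%N -> (bb < m)%N -> ((bb + m).-1 + (m - t) = (bb + m - t.+1) + m)%N.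
Proof. move=> H1 H2. rewrite addnS /=. lia. Qed.

Lemma circ_f (M : 'M[Rv]_m) : circulant M ->
  forall a b : 'I_m, M a b = M ord0 (inord ((b + m - a) %% m)).
Proof.
move=> Hc a b; move Ht: (val a) => t.
elim: t a b Ht => [|t IH] a b Ht.
  have -> : a = ord0 by apply/val_inj.
  congr (M _ _); apply/val_inj; rewrite /= inordK ?ltn_pmod // subn0 modnDr modn_small //.
have Htm : (t.+1 < m)%N by rewrite -Ht ltn_ord.
pose a' : 'I_m := Ordinal (ltnW Htm).
have -> : a = Ordinal (Htm : (a'.+1 < m)%N) by apply/val_inj.
have -> : M (Ordinal (Htm : (a'.+1 < m)%N)) b = M a' (ord_pred b) by rewrite -(Hc a' (ord_pred b) Htm) ord_predK.
rewrite (IH a' (ord_pred b)) //.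
congr (M _ _); apply/val_inj; rewrite /= !inordK ?ltn_pmod //=.
have Hb := ltn_ord b.
rewrite -addnBA ?(ltnW (ltnW Htm)) // modnDml.
rewrite (arith1 Htm Hb).
by rewrite modnDr.
Qed.

Lemma circ_sym (M : 'M[Rv]_m) : circulant M ->
  forall i j : 'I_m, M i (pp j) = M j (pp i).
Proof.
move=> Hc i j; rewrite (circ_f Hc i) (circ_f Hc j); congr (M _ _); apply/val_inj.
rewrite /= !inordK ?ltn_pmod //=.
have Hi := ltn_ord i; have Hj := ltn_ord j.
rewrite -!addnBA ?(ltnW Hi) ?(ltnW Hj) //.
by rewrite !modnDml addnC.
Qed.


Lemma sum_pick (p : nat) (F : 'I_p -> Rv) (c : 'I_p) (x : Rv) :
  \sum_a F a * (if a == c then x else 0) = F c * x.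
Proof.
rewrite (bigD1 c) //= eqxx big1 ?addr0 // => a /negbTE ->; by rewrite mulr0.
Qed.

Definition qq (i : 'I_k.+2) : 'I_k.+2 :=
  if unlift ord0 i is Some i' then lift ord0 (pp i') else ord0.

Lemma qq0 : qq ord0 = ord0. Proof. by rewrite /qq unlift_none. Qed.
Lemma qqS x : qq (lift ord0 x) = lift ord0 (pp x). Proof. by rewrite /qq liftK. Qed.

Lemma qqK : involutive qq.
Proof. by move=> i; case: (unliftP ord0 i) => [j ->|->]; rewrite ?qqS ?ppK ?qq0. Qed.

Variables (alpha beta gamma : Rv) (M : 'M[Rv]_m).
Hypothesis Hc : circulant M.
Hypothesis Hg : gamma = beta \/ gamma = - beta.

Definition eps : Rv := if gamma == beta then 1 else -1.
Definition dd (j : 'I_k.+2) : Rv := if j == ord0 then eps else 1.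

Lemma eps2 : eps * eps = 1.
Proof. by rewrite /eps; case: ifP; rewrite ?mulr1 ?mulrNN ?mulr1. Qed.

Lemma dd2 j : dd j * dd j = 1.
Proof. by rewrite /dd; case: ifP; rewrite ?eps2 ?mulr1. Qed.

Lemma epsg : eps * gamma = beta.
Proof.
rewrite /eps; case: eqP => [->|H]; first by rewrite mul1r.
by case: Hg => // ->; rewrite mulrNN mul1r.
Qed.

Lemma dd0 : dd ord0 = eps. Proof. by rewrite /dd eqxx. Qed.
Lemma ddS x : dd (lift ord0 x) = 1. Proof. by rewrite /dd eq_sym (negbTE (neq_lift _ _)). Qed.

Lemma ddq i : dd (qq i) = dd i.
Proof. by case: (unliftP ord0 i) => [i' ->|->]; rewrite ?qqS ?qq0 ?ddS. Qed.

Local Notation B := (bordered alpha beta gamma M).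

Lemma B00 : B ord0 ord0 = alpha. Proof. by rewrite mxE unlift_none. Qed.
Lemma B0S x : B ord0 (lift ord0 x) = beta. Proof. by rewrite mxE unlift_none liftK. Qed.
Lemma BS0 x : B (lift ord0 x) ord0 = gamma. Proof. by rewrite mxE unlift_none liftK. Qed.
Lemma BSS x y : B (lift ord0 x) (lift ord0 y) = M x y. Proof. by rewrite mxE !liftK. Qed.

Lemma keyB i j : B i (qq j) * dd j = dd i * B j (qq i).
Proof.
case: (unliftP ord0 i) => [i' ->|->]; case: (unliftP ord0 j) => [j' ->|->];
  rewrite ?qqS ?qq0 ?ddS ?dd0 ?BSS ?B0S ?BS0 ?B00 ?mulr1 ?mul1r.
- exact: circ_sym.
- by rewrite mulrC epsg.
- by rewrite epsg.
- by rewrite mulrC.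
Qed.

Definition Qd : 'M[Rv]_k.+2 := \matrix_(a, j) (if a == qq j then dd j else 0).
Definition Qd' : 'M[Rv]_k.+2 := \matrix_(a, j) (if a == qq j then dd a else 0).

Lemma Qd'Qd : Qd' *m Qd = 1%:M.
Proof.
apply/matrixP => i l; rewrite !mxE.
under eq_bigr => a _ do rewrite !mxE.
rewrite sum_pick qqK; case: eqVneq => [->|_]; first by rewrite dd2.
by rewrite mul0r.
Qed.

Lemma key2 : B *m Qd = Qd *m B^T.
Proof.
apply/matrixP => i j; rewrite !mxE.
under eq_bigr => a _ do rewrite [Qd _ _]mxE.
rewrite sum_pick.
under [RHS]eq_bigr => a _ do rewrite [Qd _ _]mxE [_^T _ _]mxE.
rewrite (bigD1 (qq i)) //= qqK eqxx big1 ?addr0; first by rewrite (keyB i j) ddq.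
move=> a Ha; case: eqP => [E|]; last by rewrite mul0r.
by move: Ha; rewrite E qqK eqxx.
Qed.


Local Notation n := k.+2.
Local Notation G := (row_mx (1%:M : 'M[Rv]_n) B).
Local Notation H := (row_mx (- B^T) (1%:M : 'M[Rv]_n)).

Definition sfun (i : 'I_(n + n)) : 'I_(n + n) :=
  unsplit (match split i with inl j => inr (qq j) | inr j => inl (qq j) end).

Lemma sfunK : involutive sfun.
Proof.
move=> i; rewrite /sfun; case E: (split i) => [j|j];
  by rewrite unsplitK qqK -E splitK.
Qed.

Definition ss : 'S_(n + n) := perm (can_inj sfunK).
Definition uu (i : 'I_(n + n)) : Rv :=
  match split i with inl j => dd j | inr j => - dd j end.

Definition T : 'M[Rv]_(n + n) := \matrix_(a, i) (if a == ss i then uu i else 0).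

Lemma L1 (c : 'rV[Rv]_(n + n)) : \row_i (uu i * c 0 (ss i)) = c *m T.
Proof.
apply/matrixP => a i; rewrite !mxE ord1.
rewrite (eq_bigr (fun j => c 0 j * (if j == ss i then uu i else 0))); last by move=> j _; rewrite mxE.
by rewrite sum_pick mulrC.
Qed.

Lemma L2 : G *m T = (- Qd) *m H.
Proof.
rewrite mul_mx_row mulNmx mulmxN opprK -key2 mulNmx mulmx1.
apply/matrixP => a i; rewrite !mxE.
under eq_bigr => b _ do rewrite [T _ _]mxE.
rewrite sum_pick permE /sfun /uu.
rewrite -(splitK i); case: (split i) => j; rewrite unsplitK /=.
- rewrite ?row_mxEr ?row_mxEl [(B *m Qd) _ _]mxE.
  rewrite (eq_bigr (fun b => B a b * (if b == qq j then dd j else 0))); last by move=> b _; rewrite [Qd _ _]mxE.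
  by rewrite sum_pick.
- rewrite ?row_mxEl ?row_mxEr !mxE.
  case: eqP => _; by rewrite ?mul1r ?mul0r ?oppr0 ?mulrN.
Qed.

Lemma dot_mx N (x c : 'rV[Rv]_N) : \sum_(i < N) x 0 i * c 0 i = (x *m c^T) 0 0.
Proof. by rewrite mxE; apply: eq_bigr => i _; rewrite mxE. Qed.

Lemma L3 (x : 'rV[Rv]_(n + n)) : x \in euclid_dual (code_gen G) <-> x *m G^T = 0.
Proof.
rewrite inE; split.
- move/forallP => Hx; apply/matrixP => a j; rewrite ord1 [RHS]mxE.
  have Hin : delta_mx 0 j *m G \in code_gen G.
    by rewrite inE; apply/existsP; exists (delta_mx 0 j).
  move/implyP: (Hx (delta_mx 0 j *m G)) => /(_ Hin) /eqP; rewrite -rowE => <-.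
  by rewrite mxE; apply: eq_bigr => i _; rewrite !mxE.
- move=> Hx; apply/forallP => c; apply/implyP; rewrite inE => /existsP [w /eqP ->].
  by rewrite dot_mx trmx_mul mulmxA Hx mul0mx mxE.
Qed.

Lemma L4 (x : 'rV[Rv]_(n + n)) : x *m G^T = 0 <-> exists y, x = y *m H.
Proof.
split.
- rewrite -(hsubmxK x) tr_row_mx trmx1 mul_row_col mulmx1 => /eqP.
  rewrite addr_eq0 => /eqP ->; exists (rsubmx x).
  by rewrite mul_mx_row mulmxN mulmx1.
- case=> y ->; rewrite -mulmxA tr_row_mx trmx1 mul_row_col mulmx1 mul1mx addNr.
  by rewrite mulmx0.
Qed.

Lemma main_k : euclid_isodual (code_gen G).
Proof.
exists ss, uu; split.
  move=> i; exists (uu i); rewrite /uu; case: (split i) => j; by rewrite ?mulrNN dd2.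
apply/setP => x; apply/idP/idP.
- move/L3/L4 => [y ->]; apply/imsetP.
  exists ((- (y *m Qd')) *m G).
    by rewrite inE; apply/existsP; exists (- (y *m Qd')).
  by rewrite L1 -mulmxA L2 mulmxA mulNmx mulmxN opprK -(mulmxA y) Qd'Qd mulmx1.
- case/imsetP => c; rewrite inE => /existsP [w /eqP ->] ->.
  apply/L3/L4; exists (w *m - Qd).
  by rewrite L1 -mulmxA L2 mulmxA.
Qed.

End Aux.

Theorem mainTheorem9 (n : nat) (Hn : (2 <= n)%N) (M : 'M[Rv]_(n.-1))
  (alpha beta gamma : Rv) :
  circulant M -> (gamma = beta \/ gamma = - beta) ->
  euclid_isodual (code_gen (row_mx 1%:M (bordered alpha beta gamma M))).
Proof.
case: n Hn M => [|[|k]] // _ M Hc Hg.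
exact: (@main_k k alpha beta gamma M Hc Hg).
Qed.
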